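(* Let $k$ be a field of characteristic $0$ containing a primitive fifth root of unity, let $a,b\in k$ be such that the threefold $xu^2+2yuv+zv^2+2z^2u+2x^2v+ay^3+bxyz=0$ in $\mathbb{P}^4$ is smooth, and let $\mathcal{D}_{a,b}$ be the genus four curve with affine model $$(T_1-2)(T_1^2+T_1-1)^2+(a+b+4-10T_1+5T_1^3)w^2+(-2-b+5T_1)w^4=0,$$ with the degree four map $\mathcal{D}_{a,b}\to\mathbb{P}^1$, $(T_1,w)\mapsto T_1$. Assume this map is not a Galois cover and let $\widetilde{\mathcal{D}}_{a,b}\to\mathbb{P}^1$ be its Galois closure (normalization). Then the double cover $\widetilde{\mathcal{D}}_{a,b}\to\mathcal{D}_{a,b}$ is given by the function field extension $k(\widetilde{\mathcal{D}}_{a,b})=k(\mathcal{D}_{a,b})(t)$ with $$t^2=\frac{T_1-2}{5T_1-b-2}.$$ *)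

(* Defs.v *)
From HB Require Import structures.
From mathcomp Require Import all_boot all_order all_algebra all_fingroup all_field.
From mathcomp Require Import fraction.
From mathcomp Require Import mpoly.
Set Implicit Arguments. Unset Strict Implicit. Unset Printing Implicit Defensive.
Import GRing.Theory.
Local Open Scope ring_scope.

Section Defs.
Variable k : fieldType.

Definition ix : 'I_5 := @Ordinal 5 0 isT.
Definition iy : 'I_5 := @Ordinal 5 1 isT.
Definition iz : 'I_5 := @Ordinal 5 2 isT.
Definition iu : 'I_5 := @Ordinal 5 3 isT.
Definition iv : 'I_5 := @Ordinal 5 4 isT.

Definition cubic3fold (a b : k) : mpoly.mpoly 5 k :=
  let x := mpoly.mpolyX k (mpoly.mnm1 ix) in
  let y := mpoly.mpolyX k (mpoly.mnm1 iy) in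
  let z := mpoly.mpolyX k (mpoly.mnm1 iz) in
  let u := mpoly.mpolyX k (mpoly.mnm1 iu) in
  let v := mpoly.mpolyX k (mpoly.mnm1 iv) in
  x * u ^+ 2 + 2%:R * y * u * v + z * v ^+ 2 + 2%:R * z ^+ 2 * u
  + 2%:R * x ^+ 2 * v + mpoly.mpolyC 5 a * y ^+ 3 + mpoly.mpolyC 5 b * x * y * z.

(* A projective hypersurface {G = 0} in P^n (G homogeneous) is smooth when,
   over an algebraic closure (equivalently: over every algebraically closed
   field containing k), it has no point at which all partial derivatives
   of G vanish. *)
Definition smooth_proj_hypersurface (n : nat) (G : mpoly.mpoly n k) : Prop :=
  forall (C : closedFieldType) (f : {rmorphism k -> C}) (p : 'I_n -> C),
    (exists i, p i != 0) ->
    mpoly.meval p (mpoly.map_mpoly f G) = 0 ->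
    exists i : 'I_n, mpoly.meval p (mpoly.map_mpoly f (mpoly.mderiv i G)) != 0.

Definition KT := {fraction {poly k}}.
Definition T1 : KT := tofrac ('X : {poly k}).
Definition cst (c : k) : KT := tofrac (c%:P).

Definition Dpoly (a b : k) : {poly KT} :=
  ((T1 - 2%:R) * (T1 ^+ 2 + T1 - 1) ^+ 2)%:P
  + (cst a + cst b + 4%:R - 10%:R * T1 + 5%:R * T1 ^+ 3)%:P * 'X ^+ 2
  + (- 2%:R - cst b + 5%:R * T1)%:P * 'X ^+ 4.

Definition tsq (b : k) : KT := (T1 - 2%:R) / (5%:R * T1 - cst b - 2%:R).

End Defs.

(* Main.v *)
Require Import Defs.
From HB Require Import structures.
From mathcomp Require Import all_boot all_order all_algebra all_fingroup all_field.
From mathcomp Require Import fraction.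
From mathcomp Require Import mpoly.
From mathcomp Require Import ring.
Set Warnings "-notation-overridden,-ambiguous-paths,-notation-incompatible-prefix".
Set Implicit Arguments. Unset Strict Implicit. Unset Printing Implicit Defensive.
Import GRing.Theory.
Local Open Scope ring_scope.

Section KTfacts.
Variable k : fieldType.
Hypothesis char0 : [pchar k] =i pred0.

Definition Q : KT k := T1 k ^+ 2 + T1 k - 1.
Definition C0 : KT k := (T1 k - 2%:R) * Q ^+ 2.
Definition C2 (a b : k) : KT k := cst a + cst b + 4%:R - 10%:R * T1 k + 5%:R * T1 k ^+ 3.
Definition C4 (b : k) : KT k := - 2%:R - cst b + 5%:R * T1 k.

Lemma Q_neq0 : Q != 0.
Proof.
have -> : Q = tofrac ('X ^+ 2 + 'X - 1 : {poly k}).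
  by rewrite /Q /T1 tofracB tofracD tofracXn tofrac1.
rewrite tofrac_eq0; apply/eqP => /(congr1 (fun p : {poly k} => p`_2)).
by rewrite !coefE /= addr0 subr0 => /eqP; rewrite oner_eq0.
Qed.

Lemma T2_neq0 : T1 k - 2%:R != 0.
Proof.
have -> : T1 k - 2%:R = tofrac ('X - 2%:R : {poly k}).
  by rewrite /T1 tofracB rmorph_nat.
rewrite tofrac_eq0; apply/eqP => /(congr1 (fun p : {poly k} => p`_1)).
by rewrite !coefE /= mul0rn subr0 => /eqP; rewrite oner_eq0.
Qed.

Lemma C0_neq0 : C0 != 0.
Proof. apply: mulf_neq0; [exact: T2_neq0 | exact: (expf_neq0 2 Q_neq0)]. Qed.

Lemma C4_neq0 b : C4 b != 0.
Proof.
have -> : C4 b = tofrac (- 2%:R - b%:P + 5%:R * 'X : {poly k}).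
  by rewrite /C4 /T1 /cst tofracD tofracB tofracN tofracM !rmorph_nat.
rewrite tofrac_eq0; apply/eqP => /(congr1 (fun p : {poly k} => p`_1)).
rewrite !coefE /= ?(mul0rn, oppr0, subr0, add0r, addr0) => /eqP.
by move/pcharf0P: char0 => ->.
Qed.

Lemma C4E b : 5%:R * T1 k - cst b - 2%:R = C4 b.
Proof. by rewrite /C4 [RHS]addrC addrA addrAC. Qed.

Lemma tsqE b : tsq b = C0 / (C4 b * Q ^+ 2).
Proof.
rewrite /tsq /C0 C4E invfM mulrA mulrAC mulfK //; exact: (expf_neq0 2 Q_neq0).
Qed.
End KTfacts.

Lemma vieta (F : fieldType) (c0 c2 c4 y1 y2 : F) :
  c4 != 0 -> y1 != y2 -> c0 + c2 * y1 + c4 * y1 ^+ 2 = 0 ->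
  c0 + c2 * y2 + c4 * y2 ^+ 2 = 0 ->
  c2 = - (c4 * (y1 + y2)) /\ c0 = c4 * (y1 * y2).
Proof.
move=> c4n0 y12 h1 h2.
have h : (y1 - y2) * (c2 + c4 * (y1 + y2)) = 0.
  transitivity ((c0 + c2 * y1 + c4 * y1 ^+ 2) - (c0 + c2 * y2 + c4 * y2 ^+ 2)).
    ring.
  by rewrite h1 h2 subrr.
move/eqP: h; rewrite mulf_eq0 subr_eq0 (negbTE y12) /= addr_eq0 => /eqP e2.
split=> //; apply/eqP; rewrite -subr_eq0; apply/eqP; rewrite -h1 e2; ring.
Qed.


Lemma root_quartic (F E : fieldType) (f : {rmorphism F -> E}) (c0 c2 c4 : F) x :
  root (map_poly f (c0%:P + c2%:P * 'X^2 + c4%:P * 'X^4)) x =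
  (f c0 + f c2 * x ^+ 2 + f c4 * x ^+ 4 == 0).
Proof.
by rewrite /root !rmorphD !rmorphM /= !map_polyC ?map_polyX !hornerE.
Qed.


Lemma map_quartic (F E : fieldType) (f : {rmorphism F -> E}) (c0 c2 c4 : F) :
  map_poly f (c0%:P + c2%:P * 'X^2 + c4%:P * 'X^4) =
  (f c0)%:P + (f c2)%:P * 'X^2 + (f c4)%:P * 'X^4.
Proof. by rewrite !rmorphD !rmorphM /= !map_polyC ?map_polyX. Qed.

Lemma quartic_fac (E : fieldType) (u w r : E) :
  (u * (w ^+ 2 * r ^+ 2))%:P + (- (u * (w ^+ 2 + r ^+ 2)))%:P * 'X^2 + u%:P * 'X^4
  = u *: \prod_(z <- [:: w; - w; r; - r]) ('X - z%:P).
Proof.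
rewrite !big_cons big_nil -mul_polyC !(rmorphM, rmorphN, rmorphD, rmorphXn) /=.
ring.
Qed.

Lemma map_quartic_alg (k : fieldType) (L : splittingFieldType (KT k)) (c0 c2 c4 : KT k) :
  map_poly (in_alg L) (c0%:P + c2%:P * 'X^2 + c4%:P * 'X^4) =
  (in_alg L c0)%:P + (in_alg L c2)%:P * 'X^2 + (in_alg L c4)%:P * 'X^4.
Proof. exact: map_quartic. Qed.

Lemma rootD (k : fieldType) (L : splittingFieldType (KT k)) a b (x : L) :
  root (map_poly (in_alg L) (Dpoly a b)) x =
  (in_alg L (C0 k) + in_alg L (@C2 k a b) * x ^+ 2 + in_alg L (@C4 k b) * x ^+ 4 == 0).
Proof. exact: root_quartic. Qed.

Theorem proposition3p5 (k : fieldType) (a b : k)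
  (char0 : [pchar k] =i pred0)
  (zeta5 : exists z : k, 5.-primitive_root z)
  (smooth : smooth_proj_hypersurface (cubic3fold a b))
  (Dirr : irreducible_poly (Dpoly a b))
  (L : splittingFieldType (KT k)) (w : L)
  (w_root : root (map_poly (in_alg L) (Dpoly a b)) w)
  (notGalois : ~~ galois 1%VS <<1%VS; w>>%VS)
  (L_galois : galois 1%VS (fullv : {vspace L}))
  (L_minimal : forall M : {subfield L},
      (<<1%VS; w>> <= M)%VS -> galois 1%VS M -> (M : {vspace L}) = fullv) :
  exists t : L,
    [/\ t ^+ 2 = in_alg L (tsq b),
        <<<<1%VS; w>>%VS; t>>%VS = fullv
      & t \notin <<1%VS; w>>%VS].
Proof.
have sepL : separable 1%VS {:L} by case/and3P: L_galois.
have c4n0 : in_alg L (C4 b) != 0 by rewrite fmorph_eq0 C4_neq0.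
have Qn0 : in_alg L (Q k) != 0 by rewrite fmorph_eq0 Q_neq0.
have c0n0 : in_alg L (C0 k) != 0 by rewrite fmorph_eq0 C0_neq0.
have [r rootr rnot] : exists2 r, root (map_poly (in_alg L) (Dpoly a b)) r
    & r \notin <<1%VS; w>>%VS.
  have := normalFieldf (1%AS : {subfield L}).
  move/normalFieldP => /(_ w (memvf w)) [rs _ Drs].
  have [allin | ] := boolP (all (fun x => x \in <<1%VS; w>>%VS) rs).
    exfalso; move/negP: notGalois; apply.
    rewrite /galois sub1v (separableSr (subvf _) sepL) /=.
    apply/splitting_normalField; first exact: sub1v.
    exists (minPoly 1%VS w); first exact: minPolyOver.
    exists rs; first by rewrite Drs eqpxx.
    apply/eqP; rewrite eqEsubv; apply/andP; split.
      apply/Fadjoin_seqP; split; [exact: sub1v | exact/allP].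
    rewrite sub_adjoin1v; apply: seqv_sub_adjoin.
    rewrite -root_prod_XsubC -Drs; exact: root_minPoly.
  case/allPn => r rsr rnot; exists r => //.
  apply: root_dvdp (minPoly_dvdp _ w_root) _; first exact: alg_polyOver.
  move: rsr; rewrite -root_prod_XsubC -Drs; exact: id.
have wE : w \in <<1%VS; w>>%VS := memv_adjoin _ _.
have y12 : w ^+ 2 != r ^+ 2.
  rewrite eqf_sqr; apply/norP; split; apply: contra rnot => /eqP ew.
    by rewrite -ew.
  have -> : r = - w by rewrite ew opprK.
  by rewrite rpredN.
have hw : in_alg L (C0 k) + in_alg L (C2 a b) * w ^+ 2
          + in_alg L (C4 b) * (w ^+ 2) ^+ 2 = 0.
  by rewrite -exprM; apply/eqP; rewrite -rootD.
have hr : in_alg L (C0 k) + in_alg L (C2 a b) * r ^+ 2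
          + in_alg L (C4 b) * (r ^+ 2) ^+ 2 = 0.
  by rewrite -exprM; apply/eqP; rewrite -rootD.
have [e2 e0] := vieta c4n0 y12 hw hr.
have wn0 : w != 0.
  by apply: contraNneq c0n0 => w0; rewrite e0 w0 expr0n mul0r mulr0.
have ht : in_alg L (tsq b)
    = in_alg L (C0 k) / (in_alg L (C4 b) * in_alg L (Q k) ^+ 2).
  rewrite tsqE; move: (C0 k) (C4 b) (Q k) => x y z.
  by rewrite fmorph_div rmorphM rmorphXn.
have phiE (K : {subfield L}) x : in_alg L x \in K.
  by apply: memvZ; exact: mem1v.
rewrite e0 in ht.
have qE : in_alg L (Q k) \in <<1%VS; w>>%VS := phiE _ _.
set q := in_alg L (Q k) in Qn0 ht qE *.
set c4 := in_alg L (C4 b) in c4n0 ht e0 e2 *.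
have rE : r = (w * r / q) * q / w by field; rewrite wn0 Qn0.
exists (w * r / q); split.
- by rewrite ht; field; rewrite c4n0 Qn0.
- set t := w * r / q.
  have tE : t \in <<<<1%VS; w>>; t>>%VS := memv_adjoin _ _.
  have wE' : w \in <<<<1%VS; w>>; t>>%VS := subvP_adjoin _ wE.
  have qE' : q \in <<<<1%VS; w>>; t>>%VS := phiE _ _.
  have rE' : r \in <<<<1%VS; w>>; t>>%VS.
    rewrite rE; apply: memvM; first exact: memvM.
    by rewrite memvV.
  have Mfull : <<1%VS & [:: w; -w; r; -r]>>%VS = fullv.
    apply: (L_minimal <<1%VS & [:: w; -w; r; -r]>>%AS).
      rewrite sub_adjoin1v; apply: seqv_sub_adjoin; by rewrite inE eqxx.
    rewrite /galois sub1v (separableSr (subvf _) sepL) /=.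
    apply/splitting_normalField; first exact: sub1v.
    exists (map_poly (in_alg L) (Dpoly a b)); first exact: alg_polyOver.
    exists [:: w; -w; r; -r] => //.
    have -> : Dpoly a b = (C0 k)%:P + (C2 a b)%:P * 'X^2 + (C4 b)%:P * 'X^4 by [].
    rewrite map_quartic_alg e0 e2 -/c4 quartic_fac; exact: eqp_scale c4n0.
  apply/eqP; rewrite eqEsubv subvf -Mfull /=; apply/Fadjoin_seqP; split.
    exact: sub1v.
  move=> x; rewrite !inE => /or4P[]/eqP->; by rewrite ?rpredN.
- apply: contra rnot => tE; rewrite rE.
  apply: memvM; first exact: memvM.
  by rewrite memvV.
Qed.
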